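(* Let $\mathcal H$ be a connected $As^c$-$Mag$-bialgebra and $e=\mathrm{id}+\sum_{n\ge1}(-1)^n\omega^{n+1}\circ\delta^n:\bar{\mathcal H}\to\bar{\mathcal H}$. Then for every $x\in\bar{\mathcal H}$, $$x=e(x)+\omega_r^2\big((e\otimes e)(\delta^1(x))\big)+\dots+\omega_r^{n+1}\big(e^{\otimes(n+1)}(\delta^n(x))\big)+\cdots,$$ the sum being finite.
   Context: An $As^c$-$Mag$-bialgebra is a vector space $\mathcal H$ over a field with a bilinear product $\cdot$ (not assumed associative) with two-sided unit $1$ and a coassociative counital coproduct $\Delta$ with $\Delta(1)=1\otimes1$ and $\Delta(x\cdot y)=\Delta(x)\cdot(1\otimes y)+(x\otimes1)\cdot\Delta(y)-x\otimes y$, the product on $\mathcal H\otimes\mathcal H$ being componentwise. $\bar{\mathcal H}$ = kernel of the counit; $\delta(x)=\Delta(x)-x\otimes1-1\otimes x$ on $\bar{\mathcal H}$; $\delta^1=\delta$, $\delta^n=(\delta\otimes\mathrm{id}^{\otimes(n-1)})\circ\delta^{n-1}$. Connected means: for each $x\in\bar{\mathcal H}$, $\delta^n(x)=0$ for $n$ large. $\omega^m$ is the left comb ($\omega^1(x)=x$, $\omega^m(x_1,\dots,x_m)=\omega^{m-1}(x_1,\dots,x_{m-1})\cdot x_m$) and $\omega_r^m$ the right comb ($\omega_r^1(x)=x$, $\omega_r^m(x_1,\dots,x_m)=x_1\cdot\omega_r^{m-1}(x_2,\dots,x_m)$), applied to the tensor factors of an element of $\bar{\mathcal H}^{\otimes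 m}$. *)

(* Defs.v *)
(* Tensor powers H^{(x)n} of a K-vector space H are modelled
   as formal finite sums of simple tensors (elements of [tens H n]), two
   formal sums being identified ([teq]) iff every multilinear map out of
   H^n (into any K-vector space) takes the same value on them: this is the
   universal property defining the tensor product. *)
From HB Require Import structures.
From mathcomp Require Import all_boot all_order all_algebra.
Set Implicit Arguments. Unset Strict Implicit. Unset Printing Implicit Defensive.
Import GRing.Theory.
Local Open Scope ring_scope.

Definition tens (K : fieldType) (H : lmodType K) (n : nat) :=
  seq (K * n.-tuple H).

Definition tev (K : fieldType) (H V : lmodType K) (n : nat)
  (f : n.-tuple H -> V) (t : tens H n) : V :=
  \sum_(p <- t) p.1 *: f p.2.

Definition tupset (T : Type) (n : nat) (t : n.-tuple T) (i : 'I_n) (u : T)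
  : n.-tuple T := [tuple if j == i then u else tnth t j | j < n].

Definition multilinear (K : fieldType) (H V : lmodType K) (n : nat)
  (f : n.-tuple H -> V) : Prop :=
  forall (t : n.-tuple H) (i : 'I_n) (a : K) (u v : H),
    f (tupset t i (a *: u + v)) = a *: f (tupset t i u) + f (tupset t i v).

Definition teq (K : fieldType) (H : lmodType K) (n : nat) (t s : tens H n)
  : Prop :=
  forall (V : lmodType K) (f : n.-tuple H -> V), multilinear f ->
    tev f t = tev f s.

Definition tscale (K : fieldType) (H : lmodType K) (n : nat) (a : K)
  (t : tens H n) : tens H n := [seq (a * p.1, p.2) | p <- t].

(* (g (x) id^{(x)n}) applied to t, for g : H -> H^{(x)m} *)
Definition tmap_first (K : fieldType) (H : lmodType K) (m n : nat)
  (g : H -> tens H m) (t : tens H n.+1) : tens H (m + n) :=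
  flatten [seq [seq (p.1 * q.1, cat_tuple q.2 (behead_tuple p.2))
               | q <- g (thead p.2)] | p <- t].

(* (id (x) g) applied to a 2-tensor t *)
Definition tmap_second (K : fieldType) (H : lmodType K) (m : nat)
  (g : H -> tens H m) (t : tens H 2) : tens H (1 + m) :=
  flatten [seq [seq (p.1 * q.1, cat_tuple [tuple tnth p.2 ord0] q.2)
               | q <- g (tnth p.2 ord_max)] | p <- t].

Definition tmapall (K : fieldType) (H : lmodType K) (n : nat)
  (g : H -> H) (t : tens H n) : tens H n :=
  [seq (p.1, map_tuple g p.2) | p <- t].

Definition AscMag_bialgebra (K : fieldType) (H : lmodType K)
  (mul : H -> H -> H) (one : H) (Delta : H -> tens H 2) (eps : H -> K)
  : Prop :=
  (forall (a : K) (x y z : H), mul (a *: x + y) z = a *: mul x z + mul y z) /\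
  (forall (a : K) (x y z : H), mul z (a *: x + y) = a *: mul z x + mul z y) /\
  (forall x, mul one x = x) /\ (forall x, mul x one = x) /\
  (forall (a : K) (x y : H),
      teq (Delta (a *: x + y)) (tscale a (Delta x) ++ Delta y)) /\
  (forall x, teq (tmap_first Delta (Delta x)) (tmap_second Delta (Delta x))) /\
  (forall (a : K) (x y : H), eps (a *: x + y) = a * eps x + eps y) /\
  (forall x, tev (fun p : 2.-tuple H => eps (tnth p ord0) *: tnth p ord_max)
                 (Delta x) = x) /\
  (forall x, tev (fun p : 2.-tuple H => eps (tnth p ord_max) *: tnth p ord0)
                 (Delta x) = x) /\
  teq (Delta one) [:: (1, [tuple one; one])] /\
  (* Delta(x.y) = Delta(x).(1 (x) y) + (x (x) 1).Delta(y) - x (x) y *)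
  (forall x y, teq (Delta (mul x y))
     ([seq (p.1, [tuple mul (tnth p.2 ord0) one; mul (tnth p.2 ord_max) y])
        | p <- Delta x] ++
      [seq (p.1, [tuple mul x (tnth p.2 ord0); mul one (tnth p.2 ord_max)])
        | p <- Delta y] ++
      [:: (-1, [tuple x; y])])).

Definition rdelta (K : fieldType) (H : lmodType K) (one : H)
  (Delta : H -> tens H 2) (x : H) : tens H 2 :=
  Delta x ++ [:: (-1, [tuple x; one]); (-1, [tuple one; x])].

Fixpoint deltan (K : fieldType) (H : lmodType K) (one : H)
  (Delta : H -> tens H 2) (n : nat) (x : H) : tens H n.+1 :=
  match n with
  | 0 => [:: (1, [tuple x])]
  | n'.+1 => tmap_first (rdelta one Delta) (deltan one Delta n' x)
  end.

Definition omega_l (K : fieldType) (H : lmodType K) (mul : H -> H -> H)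
  (n : nat) (t : n.+1.-tuple H) : H := foldl mul (thead t) (behead t).

Fixpoint combr (H : Type) (mul : H -> H -> H) (x : H) (s : seq H) : H :=
  match s with
  | [::] => x
  | y :: s' => mul x (combr mul y s')
  end.

Definition omega_r (K : fieldType) (H : lmodType K) (mul : H -> H -> H)
  (n : nat) (t : n.+1.-tuple H) : H := combr mul (thead t) (behead t).

Definition connected (K : fieldType) (H : lmodType K) (one : H)
  (Delta : H -> tens H 2) (eps : H -> K) : Prop :=
  forall x, eps x = 0 ->
    exists N, forall n, (N <= n)%N -> teq (deltan one Delta n x) [::].

(* e : ker eps -> ker eps,  e = id + sum_{n>=1} (-1)^n omega^{n+1} o delta^n;
   the sum is finite on each x by connectedness, so e(x) is the eventual
   value of the partial sums. *)
Definition is_e (K : fieldType) (H : lmodType K) (mul : H -> H -> H) (one : H)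
  (Delta : H -> tens H 2) (eps : H -> K) (e : H -> H) : Prop :=
  forall x, eps x = 0 ->
    exists N, forall M, (N <= M)%N ->
      e x = x + \sum_(1 <= n < M.+1)
                  (-1) ^+ n *: tev (@omega_l K H mul n) (deltan one Delta n x).

(* Main.v *)
Require Import Defs.
From mathcomp Require Import all_boot all_order all_algebra.
Import GRing.Theory.
Local Open Scope ring_scope.
From mathcomp Require Import zify.
Set Implicit Arguments. Unset Strict Implicit.

Lemma tupsetE (T : Type) (x0 : T) n (t : n.-tuple T) (i : 'I_n) (w : T) :
  val (tupset t i w) = take i t ++ w :: drop i.+1 t.
Proof.
apply: (@eq_from_nth _ x0).
  rewrite size_tuple size_cat /= size_take size_drop size_tuple ltn_ord.
  have := ltn_ord i; lia.
move=> k; rewrite size_tuple => kn.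
have -> : nth x0 (tupset t i w) k = tnth (tupset t i w) (Ordinal kn).
  by rewrite (tnth_nth x0).
rewrite /tupset tnth_map tnth_ord_tuple.
rewrite nth_cat size_take size_tuple ltn_ord.
case: (ltngtP k i) => [ki|ik|ki].
- have -> : (Ordinal kn == i) = false by apply/negbTE; rewrite -val_eqE /= neq_ltn ki.
  by rewrite nth_take // (tnth_nth x0).
- have -> : (Ordinal kn == i) = false by apply/negbTE; rewrite -val_eqE /= neq_ltn ik orbT.
  by rewrite -(subnSK ik) /= nth_drop subnKC // (tnth_nth x0).
- have -> : (Ordinal kn == i) by apply/eqP; apply: val_inj.
  by rewrite /= ki subnn.
Qed.

Section Gen.
Variables (K : fieldType) (H : lmodType K).

Definition tevs (V : lmodType K) (n : nat) (F : seq H -> V) (t : tens H n) : V :=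
  \sum_(p <- t) p.1 *: F p.2.

Definition ml (V : lmodType K) (n : nat) (F : seq H -> V) : Prop :=
  forall (s1 s2 : seq H) (a : K) (u v : H), (size s1 + (size s2).+1 = n)%N ->
    F (s1 ++ (a *: u + v) :: s2) = a *: F (s1 ++ u :: s2) + F (s1 ++ v :: s2).

Variable V : lmodType K.

Lemma tevs_nil n (F : seq H -> V) : tevs F ([::] : tens H n) = 0.
Proof. by rewrite /tevs big_nil. Qed.

Lemma tevs_cons n (F : seq H -> V) p (t : tens H n) :
  tevs F (p :: t) = p.1 *: F p.2 + tevs F t.
Proof. by rewrite /tevs big_cons. Qed.

Lemma tevs_cat n (F : seq H -> V) (t1 t2 : tens H n) :
  tevs F (t1 ++ t2) = tevs F t1 + tevs F t2.
Proof. by rewrite /tevs big_cat. Qed.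

Lemma tevs_tscale n (F : seq H -> V) a (t : tens H n) :
  tevs F (tscale a t) = a *: tevs F t.
Proof.
rewrite /tevs /tscale big_map scaler_sumr; apply: eq_bigr => p _ /=.
by rewrite scalerA.
Qed.

Lemma eq_tevs n (F G : seq H -> V) (t : tens H n) :
  (forall s, size s = n -> F s = G s) -> tevs F t = tevs G t.
Proof.
move=> FG; rewrite /tevs; apply: eq_bigr => p _.
by rewrite FG // size_tuple.
Qed.

Lemma eq_tevs_seq n (F G : seq H -> V) (t : tens H n) :
  (forall p, p \in t -> F p.2 = G p.2) -> tevs F t = tevs G t.
Proof.
move=> FG; rewrite /tevs; apply: eq_big_seq => p pt.
by rewrite FG.
Qed.

Lemma tevsD n (F G : seq H -> V) (t : tens H n) :
  tevs (fun s => F s + G s) t = tevs F t + tevs G t.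
Proof. by rewrite /tevs -big_split; apply: eq_bigr => p _; rewrite scalerDr. Qed.

Lemma tevsZ n (F : seq H -> V) a (t : tens H n) :
  tevs (fun s => a *: F s) t = a *: tevs F t.
Proof.
rewrite /tevs scaler_sumr; apply: eq_bigr => p _.
by rewrite !scalerA mulrC.
Qed.

Lemma tevsN n (F : seq H -> V) (t : tens H n) :
  tevs (fun s => - F s) t = - tevs F t.
Proof.
rewrite /tevs -sumrN; apply: eq_bigr => p _; by rewrite scalerN.
Qed.

Lemma tevs0 n (t : tens H n) : tevs (fun _ => (0 : V)) t = 0.
Proof. by rewrite /tevs big1 // => p _; rewrite scaler0. Qed.

Lemma tevs_sum n I (r : seq I) (F : I -> seq H -> V) (t : tens H n) :
  tevs (fun s => \sum_(i <- r) F i s) t = \sum_(i <- r) tevs (F i) t.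
Proof.
rewrite /tevs exchange_big; apply: eq_bigr => p _.
by rewrite scaler_sumr.
Qed.

Definition islin (W1 W2 : lmodType K) (L : W1 -> W2) :=
  forall a u v, L (a *: u + v) = a *: L u + L v.

Lemma islin0 (W1 W2 : lmodType K) (L : W1 -> W2) : islin L -> L 0 = 0.
Proof.
move=> hL; have h := hL 1 0 0; rewrite !scale1r addr0 in h.
by apply: (@addrI _ (L 0)); rewrite addr0 -h.
Qed.

Lemma islinD (W1 W2 : lmodType K) (L : W1 -> W2) : islin L ->
  forall u v, L (u + v) = L u + L v.
Proof. by move=> hL u v; rewrite -{1}[u]scale1r hL scale1r. Qed.

Lemma islinZ (W1 W2 : lmodType K) (L : W1 -> W2) : islin L ->
  forall a u, L (a *: u) = a *: L u.
Proof. by move=> hL a u; rewrite -[a *: u]addr0 hL islin0 // addr0. Qed.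

Lemma islin_sum (W1 W2 : lmodType K) (L : W1 -> W2) I (r : seq I) (F : I -> W1) :
  islin L -> L (\sum_(i <- r) F i) = \sum_(i <- r) L (F i).
Proof.
move=> hL; elim: r => [|i r IH]; first by rewrite !big_nil islin0.
by rewrite !big_cons islinD // IH.
Qed.

Lemma tevs_lin (W : lmodType K) n (L : V -> W) (F : seq H -> V) (t : tens H n) :
  islin L -> tevs (fun s => L (F s)) t = L (tevs F t).
Proof.
move=> hL; rewrite /tevs islin_sum //; apply: eq_bigr => p _.
by rewrite islinZ.
Qed.

Lemma tevs_exch n m (F : seq H -> seq H -> V) (t1 : tens H n) (t2 : tens H m) :
  tevs (fun a => tevs (fun b => F a b) t2) t1 =
  tevs (fun b => tevs (fun a => F a b) t1) t2.
Proof.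
rewrite /tevs.
under eq_bigr do rewrite scaler_sumr.
rewrite exchange_big; apply: eq_bigr => q _.
rewrite scaler_sumr; apply: eq_bigr => p _.
by rewrite !scalerA mulrC.
Qed.


Lemma ml_teq n (F : seq H -> V) (t t' : tens H n) :
  ml n F -> teq t t' -> tevs F t = tevs F t'.
Proof.
move=> hF ht; apply: (ht V (fun tup => F (val tup))) => tup i a u v.
rewrite !(tupsetE 0); apply: hF.
rewrite size_take size_drop size_tuple ltn_ord; have := ltn_ord i; lia.
Qed.

Lemma ml_catr m (w : seq H) (F : seq H -> V) :
  ml (m + size w) F -> ml m (fun q => F (q ++ w)).
Proof.
move=> hF s1 s2 a u v hs; rewrite -!catA !cat_cons; apply: hF.
by rewrite size_cat -hs; lia.
Qed.

Lemma ml_catl m (w : seq H) (F : seq H -> V) :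
  ml (size w + m) F -> ml m (fun q => F (w ++ q)).
Proof.
move=> hF s1 s2 a u v hs; rewrite !catA; apply: hF.
by rewrite size_cat -hs; lia.
Qed.

Lemma theadE n (t : n.+1.-tuple H) : thead t = head 0 t.
Proof. by rewrite /thead (tnth_nth 0) nth0. Qed.

Lemma tevs_first m n (g : H -> tens H m) (F : seq H -> V) (t : tens H n.+1) :
  tevs F (tmap_first g t) =
  tevs (fun s => tevs (fun q => F (q ++ behead s)) (g (head 0 s))) t.
Proof.
rewrite /tevs /tmap_first big_flatten /= big_map; apply: eq_bigr => p _.
rewrite big_map scaler_sumr theadE; apply: eq_bigr => q _ /=.
by rewrite scalerA.
Qed.

Lemma tevs_second m (g : H -> tens H m) (F : seq H -> V) (t : tens H 2) :
  tevs F (tmap_second g t) =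
  tevs (fun s => tevs (fun q => F (nth 0 s 0 :: q)) (g (nth 0 s 1))) t.
Proof.
rewrite /tevs /tmap_second big_flatten /= big_map; apply: eq_bigr => p _.
rewrite big_map scaler_sumr !(tnth_nth 0); apply: eq_bigr => q _ /=.
by rewrite scalerA.
Qed.

Lemma tevs_mapall n (g : H -> H) (F : seq H -> V) (t : tens H n) :
  tevs F (tmapall g t) = tevs (fun s => F (map g s)) t.
Proof. by rewrite /tevs /tmapall big_map. Qed.

Definition tlin m (g : H -> tens H m) :=
  forall (F : seq H -> V) a x y, ml m F ->
    tevs F (g (a *: x + y)) = a *: tevs F (g x) + tevs F (g y).

Lemma ml_first m n (g : H -> tens H m) (F : seq H -> V) :
  tlin g -> ml (m + n) F ->
  ml n.+1 (fun s => tevs (fun q => F (q ++ behead s)) (g (head 0 s))).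
Proof.
move=> hg hF [|h s1] s2 a u v /= hs.
  apply: hg; apply: ml_catr; have -> : size s2 = n by lia.
  exact: hF.
rewrite -tevsZ -tevsD; apply: eq_tevs => q hq.
rewrite !catA; apply: hF; rewrite size_cat hq; lia.
Qed.

End Gen.

Section Bialg.
Variables (K : fieldType) (H : lmodType K) (mul : H -> H -> H) (one : H)
  (Delta : H -> tens H 2) (eps : H -> K).
Hypothesis mulDl : forall (a : K) (x y z : H), mul (a *: x + y) z = a *: mul x z + mul y z.
Hypothesis mulDr : forall (a : K) (x y z : H), mul z (a *: x + y) = a *: mul z x + mul z y.
Hypothesis DeltaL : forall (a : K) (x y : H),
      teq (Delta (a *: x + y)) (tscale a (Delta x) ++ Delta y).
Hypothesis coass : forall x, teq (tmap_first Delta (Delta x)) (tmap_second Delta (Delta x)).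
Hypothesis epsL : forall (a : K) (x y : H), eps (a *: x + y) = a * eps x + eps y.
Hypothesis cu1 : forall x, tev (fun p : 2.-tuple H => eps (tnth p ord0) *: tnth p ord_max)
                 (Delta x) = x.
Hypothesis cu2 : forall x, tev (fun p : 2.-tuple H => eps (tnth p ord_max) *: tnth p ord0)
                 (Delta x) = x.
Hypothesis Done : teq (Delta one) [:: (1, [tuple one; one])].
Hypothesis eps1 : eps one = 1.

Lemma ac3 (Z : zmodType) (x1 y1 x2 y2 x3 y3 : Z) :
  x1 + y1 - (x2 + y2) - (x3 + y3) = x1 - x2 - x3 + (y1 - y2 - y3).
Proof. by rewrite !opprD (addrACA x1) (addrACA (x1 - x2)). Qed.

Lemma ml2 (F : seq H -> H) :
  (forall a u v b, F [:: a *: u + v; b] = a *: F [:: u; b] + F [:: v; b]) ->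
  (forall a u v b, F [:: b; a *: u + v] = a *: F [:: b; u] + F [:: b; v]) ->
  ml 2 F.
Proof.
move=> h1 h2 [|x [|y s1]] [|z [|w s2]] a u v //= hs; try lia;
  by [rewrite h1 | rewrite h2].
Qed.

Lemma cu1s x : tevs (fun s => eps (nth 0 s 0) *: nth 0 s 1) (Delta x) = x.
Proof.
apply: (etrans _ (cu1 x)); rewrite /tevs /tev; apply: eq_bigr => p _.
by rewrite !(tnth_nth 0).
Qed.

Lemma cu2s x : tevs (fun s => eps (nth 0 s 1) *: nth 0 s 0) (Delta x) = x.
Proof.
apply: (etrans _ (cu2 x)); rewrite /tevs /tev; apply: eq_bigr => p _.
by rewrite !(tnth_nth 0).
Qed.


Lemma eps0 : eps 0 = 0.
Proof.
have h := epsL 1 0 0; rewrite !scale1r addr0 mul1r in h.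
by apply: (@addrI _ (eps 0)); rewrite addr0 -h.
Qed.

Lemma epsD x y : eps (x + y) = eps x + eps y.
Proof. by rewrite -{1}[x]scale1r epsL mul1r. Qed.

Lemma epsZ a x : eps (a *: x) = a * eps x.
Proof. by rewrite -[a *: x]addr0 epsL eps0 addr0. Qed.

Lemma mul_linl b : islin (fun h => mul h b).
Proof. by move=> a u v; rewrite mulDl. Qed.

Lemma mul_linr b : islin (fun h => mul b h).
Proof. by move=> a u v; rewrite mulDr. Qed.

Lemma rdeltaE (V : lmodType K) (F : seq H -> V) z :
  tevs F (rdelta one Delta z) = tevs F (Delta z) - F [:: z; one] - F [:: one; z].
Proof.
by rewrite /rdelta tevs_cat !tevs_cons tevs_nil addr0 !scaleN1r addrA.
Qed.

Lemma Delta_lin (F : seq H -> H) a x y : ml 2 F ->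
  tevs F (Delta (a *: x + y)) = a *: tevs F (Delta x) + tevs F (Delta y).
Proof.
move=> hF; rewrite (ml_teq hF (DeltaL a x y)) tevs_cat tevs_tscale //.
Qed.

Lemma rdelta_lin : tlin H (rdelta one Delta).
Proof.
move=> F a x y hF; rewrite !rdeltaE Delta_lin //.
have h1 := hF [::] [:: one] a x y erefl.
have h2 := hF [:: one] [::] a x y erefl.
rewrite /= in h1 h2; rewrite h1 h2 !scalerBr.
set A := tevs F (Delta x); set B := tevs F (Delta y).
set c1 := F [:: x; one]; set c2 := F [:: y; one].
set d1 := F [:: one; x]; set d2 := F [:: one; y].
exact: ac3.
Qed.

Lemma Delta_one (F : seq H -> H) : ml 2 F -> tevs F (Delta one) = F [:: one; one].
Proof.
move=> hF; rewrite (ml_teq hF Done) tevs_cons tevs_nil addr0 scale1r //.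
Qed.

Lemma rdelta_one (F : seq H -> H) : ml 2 F -> tevs F (rdelta one Delta one) = - F [:: one; one].
Proof.
move=> hF; rewrite rdeltaE Delta_one //.
by rewrite subrr add0r.
Qed.

Lemma deltanS n (F : seq H -> H) x :
  tevs F (deltan one Delta n.+1 x) =
  tevs (fun s => tevs (fun q => F (q ++ behead s)) (rdelta one Delta (head 0 s)))
       (deltan one Delta n x).
Proof. exact: (@tevs_first K H H 2 n (rdelta one Delta) F (deltan one Delta n x)). Qed.

Lemma deltan0 (F : seq H -> H) x : tevs F (deltan one Delta 0 x) = F [:: x].
Proof. by rewrite /= tevs_cons tevs_nil addr0 scale1r. Qed.

Lemma deltan_lin n (F : seq H -> H) a x y : ml n.+1 F ->
  tevs F (deltan one Delta n (a *: x + y)) =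
  a *: tevs F (deltan one Delta n x) + tevs F (deltan one Delta n y).
Proof.
elim: n F => [|n IH] F hF.
  rewrite !deltan0.
  exact: (hF [::] [::]).
rewrite !deltanS; apply: IH.
by apply: ml_first; [exact: rdelta_lin|].
Qed.


Lemma foo7 (Z : zmodType) (a b c d e f g : Z) :
 a - b - c - (d - e - f) - (- g) = a - d - b - (- e) - (c - f - g).
Proof.
rewrite !opprD !opprK !addrA; congr (_ + _ + _).
rewrite [RHS]addrAC; congr (_ + _).
by rewrite (addrAC a (-d)) [RHS]addrAC.
Qed.

Lemma size2E (s : seq H) : size s = 2 -> s = [:: nth 0 s 0; nth 0 s 1].
Proof. by case: s => [|a [|b [|c s]]]. Qed.

Lemma coass_r (F : seq H -> H) x : ml 3 F ->
  tevs (fun u => tevs (fun q => F (q ++ behead u)) (rdelta one Delta (head 0 u)))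
       (rdelta one Delta x)
  = tevs (fun s => tevs (fun q => F (take 1 s ++ q)) (rdelta one Delta (nth 0 s 1)))
       (rdelta one Delta x).
Proof.
move=> hF.
set X1 := tevs (fun u => F [:: nth 0 u 0; one; nth 0 u 1]) (Delta x).
set X2 := tevs (fun u => F [:: one; nth 0 u 0; nth 0 u 1]) (Delta x).
set X3 := tevs (fun u => F [:: nth 0 u 0; nth 0 u 1; one]) (Delta x).
have hT : tevs (fun u => tevs (fun q => F (q ++ behead u)) (Delta (head 0 u))) (Delta x)
        = tevs (fun s => tevs (fun q => F (nth 0 s 0 :: q)) (Delta (nth 0 s 1))) (Delta x).
  rewrite -(@tevs_first K H H 2 1 Delta F (Delta x)) -(tevs_second Delta F (Delta x)).
  exact: (ml_teq hF (coass x)).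
have hF2 : forall w : seq H, size w = 1%N -> ml 2 (fun q => F (q ++ w)).
  by move=> w hw; apply: ml_catr; rewrite hw.
have hF2' : forall w : seq H, size w = 1%N -> ml 2 (fun q => F (w ++ q)).
  by move=> w hw; apply: ml_catl; rewrite hw.
rewrite !rdeltaE /=.
have eA : tevs (fun u => tevs (fun q => F (q ++ behead u)) (rdelta one Delta (head 0 u))) (Delta x)
   = tevs (fun u => tevs (fun q => F (q ++ behead u)) (Delta (head 0 u))) (Delta x) - X1 - X2.
  rewrite /X1 /X2 -!tevsN -!tevsD; apply: eq_tevs => u hu.
  by rewrite rdeltaE (size2E hu).
have eB : tevs (fun s => tevs (fun q => F (take 1 s ++ q)) (rdelta one Delta (nth 0 s 1))) (Delta x)
   = tevs (fun s => tevs (fun q => F (nth 0 s 0 :: q)) (Delta (nth 0 s 1))) (Delta x) - X3 - X1.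
  rewrite /X1 /X3 -!tevsN -!tevsD; apply: eq_tevs => u hu.
  by rewrite rdeltaE (size2E hu).
have eX3 : tevs (fun q => F (q ++ [:: one])) (Delta x) = X3.
  by apply: eq_tevs => u hu; rewrite (size2E hu).
have eX2 : tevs (fun q => F (one :: q)) (Delta x) = X2.
  by apply: eq_tevs => u hu; rewrite (size2E hu).
rewrite eA eB hT eX3 eX2.
rewrite (Delta_one (hF2 [:: x] erefl)) (Delta_one (hF2' [:: x] erefl)) /= !subrr !add0r.
exact: foo7.
Qed.

Lemma deltan_lastS k (F : seq H -> H) x : ml k.+3 F ->
  tevs F (deltan one Delta k.+2 x) =
  tevs (fun s => tevs (fun q => F (take k.+1 s ++ q)) (rdelta one Delta (nth 0 s k.+1)))
       (deltan one Delta k.+1 x).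
Proof.
elim: k F => [|k IH] F hF.
  rewrite deltanS deltanS deltan0 [RHS]deltanS deltan0 /=.
  have -> : tevs (fun q => tevs (fun q0 => F (q0 ++ behead (q ++ [::])))
              (rdelta one Delta (head 0 (q ++ [::])))) (rdelta one Delta x) =
            tevs (fun u => tevs (fun q => F (q ++ behead u)) (rdelta one Delta (head 0 u)))
              (rdelta one Delta x).
    by apply: eq_tevs => u _; rewrite cats0.
  rewrite coass_r //; apply: eq_tevs => u _; by rewrite cats0.
rewrite deltanS IH; last by apply: ml_first; [exact: rdelta_lin|].
rewrite [RHS]deltanS; apply: eq_tevs => s hs.
case: s hs => [|a s'] //= [hs'].
rewrite tevs_exch; apply: eq_tevs => q hq.
by rewrite (size2E hq) /=.
Qed.

Lemma deltan_last N (F : seq H -> H) x : ml N.+2 F ->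
  tevs F (deltan one Delta N.+1 x) =
  tevs (fun s => tevs (fun q => F (take N s ++ q)) (rdelta one Delta (nth 0 s N)))
       (deltan one Delta N x).
Proof.
case: N => [|k] hF; last exact: deltan_lastS.
rewrite deltanS !deltan0 /=; apply: eq_tevs => u _; by rewrite cats0.
Qed.

Lemma rdelta_eps_snd x : eps x = 0 ->
  tevs (fun q => eps (nth 0 q 1) *: nth 0 q 0) (rdelta one Delta x) = 0.
Proof.
move=> hx; rewrite rdeltaE cu2s /= eps1 hx scale0r scale1r subrr subr0 //.
Qed.

Lemma rdelta_eps_fst x : eps x = 0 ->
  tevs (fun q => eps (nth 0 q 0) *: nth 0 q 1) (rdelta one Delta x) = 0.
Proof.
move=> hx; rewrite rdeltaE cu1s /= eps1 hx scale0r scale1r subr0 subrr //.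
Qed.

Lemma eps_last N (G : seq H -> H) x : eps x = 0 -> ml N G ->
  tevs (fun s => eps (nth 0 s N) *: G (take N s)) (deltan one Delta N x) = 0.
Proof.
move=> hx; elim: N G => [|N IH] G hG.
  by rewrite deltan0 /= hx scale0r.
rewrite deltanS; case: N IH hG => [|k] IH hG.
  rewrite deltan0 /=.
  have hL : islin (fun y => G [:: y]).
    by move=> a u v; apply: (hG [::] [::]).
  rewrite -[RHS](islin0 hL) -(rdelta_eps_snd hx).
  transitivity (tevs (fun q => G [:: eps (nth 0 q 1) *: nth 0 q 0]) (rdelta one Delta x)).
    apply: eq_tevs => q hq; rewrite (size2E hq) /=; symmetry; exact: (islinZ hL).
  exact: (tevs_lin _ _ hL).
rewrite -[RHS](IH (fun w => tevs (fun q => G (q ++ behead w)) (rdelta one Delta (head 0 w)))).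
  apply: eq_tevs => u hu; case: u hu => [|a u'] //= hu'.
  rewrite -tevsZ; apply: eq_tevs => q hq; by rewrite (size2E hq) /=.
by apply: ml_first; [exact: rdelta_lin|].
Qed.

Lemma ex_bound (T : eqType) (l : seq T) (Q : T -> nat -> Prop) :
  (forall p, p \in l -> exists N, forall M, (N <= M)%N -> Q p M) ->
  exists N, forall p, p \in l -> forall M, (N <= M)%N -> Q p M.
Proof.
elim: l => [|a l IH] h; first by exists 0%N.
have [N1 h1] := h a (mem_head a l).
have [N2 h2] : exists N, forall p, p \in l -> forall M, (N <= M)%N -> Q p M.
  by apply: IH => p pl; apply: h; rewrite in_cons pl orbT.
exists (maxn N1 N2) => p; rewrite in_cons => /orP [/eqP -> | pl] M hM.
  by apply: h1; apply: leq_trans hM; apply: leq_maxl.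
by apply: h2 => //; apply: leq_trans hM; apply: leq_maxr.
Qed.

Lemma ac2 (Z : zmodType) (x1 y1 x2 y2 : Z) : x1 + y1 - (x2 + y2) = x1 - x2 + (y1 - y2).
Proof. by rewrite opprD addrACA. Qed.

Variable e : H -> H.
Hypothesis He : is_e mul one Delta eps e.

Definition P (y : H) := y - eps y *: one.
Definition e' (y : H) := e (P y).
Definition wl (s : seq H) := foldl mul (head 0 s) (behead s).
Definition E (M : nat) (w : H) :=
  \sum_(0 <= i < M) (-1) ^+ i *: tevs wl (deltan one Delta i w).

Lemma epsP y : eps (P y) = 0.
Proof. by rewrite /P epsD -scaleNr epsZ eps1 mulr1 subrr. Qed.

Lemma P_lin : islin P.
Proof.
move=> a u v; rewrite /P epsL scalerDl -scalerA ac2 scalerBr //.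
Qed.

Lemma PE y : y = eps y *: one + P y.
Proof. by rewrite /P addrC subrK. Qed.

Lemma foldl_lin s : islin (fun x => foldl mul x s).
Proof.
elim: s => [|y s IH] a u v //=.
by rewrite mulDl IH.
Qed.

Lemma ml_wl n : ml n wl.
Proof.
move=> [|h s1] s2 a u v _; rewrite /wl /=; first exact: foldl_lin.
rewrite !foldl_cat /=; rewrite mulDr; exact: foldl_lin.
Qed.

Lemma E_lin M : islin (E M).
Proof.
move=> a u v; rewrite /E scaler_sumr -big_split; apply: eq_bigr => i _ /=.
rewrite deltan_lin; last exact: ml_wl.
by rewrite scalerDr !scalerA mulrC.
Qed.

Lemma is_eE w : eps w = 0 -> exists N, forall M, (N <= M)%N -> e w = E M.+1 w.
Proof.
move=> hw; have [N hN] := He hw; exists N => M hM; rewrite (hN M hM) /E.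
rewrite [RHS]big_nat_recl // expr0 scale1r deltan0 /= big_add1 /=.
congr (_ + _); apply: eq_bigr => i _; congr (_ *: _).
rewrite /tevs /tev; apply: eq_bigr => p _; by rewrite /omega_l theadE.
Qed.

Lemma e_lin0 u v a : eps u = 0 -> eps v = 0 -> e (a *: u + v) = a *: e u + e v.
Proof.
move=> hu hv.
have huv : eps (a *: u + v) = 0 by rewrite epsL hu hv mulr0 addr0.
have [N1 h1] := is_eE hu; have [N2 h2] := is_eE hv; have [N3 h3] := is_eE huv.
set M := maxn N1 (maxn N2 N3).
rewrite (h1 M) ?leq_maxl // (h2 M) ?(leq_trans (leq_maxl _ _) (leq_maxr _ _)) //.
rewrite (h3 M) ?(leq_trans (leq_maxr _ _) (leq_maxr _ _)) //.
exact: E_lin.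
Qed.

Lemma e'_lin : islin e'.
Proof. by move=> a u v; rewrite /e' P_lin e_lin0 // epsP. Qed.

Lemma deltan_fst m (F : seq H -> H) z :
  tevs F (deltan one Delta m.+1 z) =
  tevs (fun u => tevs (fun t => F (t ++ [:: nth 0 u 1])) (deltan one Delta m (nth 0 u 0)))
       (rdelta one Delta z).
Proof.
elim: m F => [|m IH] F.
  rewrite deltanS deltan0; apply: eq_tevs => u hu.
  by rewrite deltan0 cats0 (size2E hu).
rewrite deltanS IH; apply: eq_tevs => u hu.
rewrite deltanS; apply: eq_tevs => t ht.
case: t ht => [|a t'] //= _; apply: eq_tevs => q _; by rewrite catA.
Qed.

Lemma wl_rcons t b : t != [::] -> wl (t ++ [:: b]) = mul (wl t) b.
Proof. by case: t => [|a t] //= _; rewrite /wl /= foldl_cat. Qed.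

Lemma mul_suml I (r : seq I) (F : I -> H) b :
  mul (\sum_(i <- r) F i) b = \sum_(i <- r) mul (F i) b.
Proof.
elim: r => [|i r IH]; first by rewrite !big_nil; exact: (islin0 (mul_linl b)).
by rewrite !big_cons -IH; exact: (islinD (mul_linl b)).
Qed.

Lemma mul_scalel a x b : mul (a *: x) b = a *: mul x b.
Proof. exact: (islinZ (mul_linl b) a x). Qed.

Lemma mul_tevsl n (F : seq H -> H) (t : tens H n) b :
  mul (tevs F t) b = tevs (fun s => mul (F s) b) t.
Proof. symmetry; exact: (tevs_lin _ _ (mul_linl b)). Qed.

Lemma mul_tevsr n (F : seq H -> H) (t : tens H n) b :
  mul b (tevs F t) = tevs (fun s => mul b (F s)) t.
Proof. symmetry; exact: (tevs_lin _ _ (mul_linr b)). Qed.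

Lemma mul_scaler a x b : mul b (a *: x) = a *: mul b x.
Proof. exact: (islinZ (mul_linr b) a x). Qed.

Lemma mul0r' b : mul b 0 = 0.
Proof. exact: (islin0 (mul_linr b)). Qed.

Lemma E_linE M a u v : E M (a *: u + v) = a *: E M u + E M v.
Proof. exact: E_lin. Qed.

Lemma Eexp M z :
  E M.+1 z = z - tevs (fun u => mul (E M (nth 0 u 0)) (nth 0 u 1)) (rdelta one Delta z).
Proof.
rewrite /E big_nat_recl // expr0 scale1r deltan0; congr (_ + _).
rewrite -tevsN; under eq_tevs => u _ do rewrite mul_suml -sumrN.
rewrite tevs_sum; apply: eq_bigr => i _.
rewrite deltan_fst -tevsZ; apply: eq_tevs => u hu.
rewrite mul_scalel mul_tevsl.
rewrite -scaleNr exprS mulN1r; congr (_ *: _); apply: eq_tevs => t ht.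
rewrite wl_rcons //; apply/eqP => t0; by rewrite t0 in ht.
Qed.

Lemma lemA y :
  P y = e' y + tevs (fun q => mul (e' (nth 0 q 0)) (nth 0 q 1)) (rdelta one Delta (P y)).
Proof.
set z := P y.
have hz : eps z = 0 by exact: epsP.
have [N hN] : exists N, (forall M, (N <= M)%N -> e z = E M.+1 z) /\
    forall p, p \in rdelta one Delta z -> forall M, (N <= M)%N ->
      e (P (nth 0 p.2 0)) = E M.+1 (P (nth 0 p.2 0)).
  have [N1 h1] := is_eE hz.
  have [N2 h2] := @ex_bound _ (rdelta one Delta z)
                    (fun p M => e (P (nth 0 p.2 0)) = E M.+1 (P (nth 0 p.2 0)))
                    (fun p _ => is_eE (epsP (nth 0 p.2 0))).
  exists (maxn N1 N2); split => [M hM|p hp M hM].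
    by apply: h1; apply: leq_trans hM; apply: leq_maxl.
  by apply: h2 => //; apply: leq_trans hM; apply: leq_maxr.
case: hN => hz1 hz2.
rewrite /e' -/z (hz1 N.+1) // Eexp.
have -> : tevs (fun u => mul (E N.+1 (nth 0 u 0)) (nth 0 u 1)) (rdelta one Delta z) =
          tevs (fun u => mul (e (P (nth 0 u 0))) (nth 0 u 1)) (rdelta one Delta z).
  transitivity (tevs (fun u => mul (e (P (nth 0 u 0))) (nth 0 u 1) +
                  mul (E N.+1 one) (eps (nth 0 u 0) *: nth 0 u 1)) (rdelta one Delta z)).
    apply: eq_tevs_seq => p hp.
    rewrite {1}(PE (nth 0 p.2 0)) E_linE mulDl (hz2 p hp N) // mul_scaler.
    by rewrite addrC.
  rewrite tevsD -mul_tevsr rdelta_eps_fst // mul0r' addr0 //.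
by rewrite subrK.
Qed.

Fixpoint cR (s : seq H) : H :=
  match s with
  | [::] => 0
  | [:: y] => y
  | y :: s' => mul (e' y) (cR s')
  end.

Definition wr (s : seq H) := combr mul (head 0 s) (behead s).

Lemma cR_cons y s : s != [::] -> cR (y :: s) = mul (e' y) (cR s).
Proof. by case: s. Qed.

Lemma wr_cons y s : s != [::] -> wr (y :: s) = mul y (wr s).
Proof. by case: s. Qed.

Lemma ml_cR n : ml n cR.
Proof.
move=> s1 s2 a u v _; elim: s1 => [|h s1 IH].
  case: s2 => [|z s2] //=.
  by rewrite e'_lin mulDl.
rewrite !cat_cons.
by rewrite !cR_cons ?IH ?mulDr //; case: s1 {IH}.
Qed.

Lemma ml_wre n : ml n (fun s => wr (map e' s)).
Proof.
move=> s1 s2 a u v _; elim: s1 => [|h s1 IH].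
  case: s2 => [|z s2] /=; first by rewrite /wr /= e'_lin.
  by rewrite /wr /= e'_lin mulDl.
rewrite !cat_cons !map_cons.
by rewrite !wr_cons ?IH ?mulDr //; case: s1 {IH}.
Qed.

Lemma cR_last w y : cR (w ++ [:: e' y]) = wr (map e' (w ++ [:: y])).
Proof.
elim: w => [|h w IH]; first by [].
rewrite !cat_cons map_cons cR_cons; last by case: w {IH}.
rewrite IH wr_cons //; by case: w {IH}.
Qed.

Lemma cR_mul_last w a b : cR (w ++ [:: mul (e' a) b]) = cR (w ++ [:: a; b]).
Proof.
elim: w => [|h w IH]; first by [].
rewrite !cat_cons !cR_cons ?IH //; by case: w {IH}.
Qed.

Lemma cR_lin_last w : islin (fun h => cR (w ++ [:: h])).
Proof. move=> a u v; apply: (ml_cR (n := (size w).+1)); by rewrite addn1. Qed.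

Lemma cR_tevs_last w n (G : seq H -> H) (t : tens H n) :
  cR (w ++ [:: tevs G t]) = tevs (fun q => cR (w ++ [:: G q])) t.
Proof. symmetry; exact: (tevs_lin _ _ (cR_lin_last w)). Qed.

Lemma rdeltaP (F : seq H -> H) y : ml 2 F ->
  tevs F (rdelta one Delta (P y)) = tevs F (rdelta one Delta y) + eps y *: F [:: one; one].
Proof.
move=> hF.
have -> : P y = (- eps y) *: one + y by rewrite /P addrC scaleNr.
rewrite rdelta_lin // rdelta_one // scalerN scaleNr opprK addrC //.
Qed.

Lemma takeE N (s : seq H) : size s = N.+1 -> s = take N s ++ [:: nth 0 s N].
Proof.
move=> hs; rewrite -{1}(cat_take_drop N s); congr (_ ++ _).
by rewrite (drop_nth 0) ?hs // drop_oversize ?hs.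
Qed.

Lemma main_step N x : eps x = 0 ->
  tevs cR (deltan one Delta N x) =
  tevs (fun s => wr (map e' s)) (deltan one Delta N x) + tevs cR (deltan one Delta N.+1 x).
Proof.
move=> hx.
have hpt : forall s, size s = N.+1 -> cR s =
   wr (map e' s) + tevs (fun q => cR (take N s ++ q)) (rdelta one Delta (nth 0 s N)) +
   (eps (nth 0 s N) *: cR (take N s ++ [:: one]) +
    eps (nth 0 s N) *: cR (take N s ++ [:: one; one])).
  move=> s hs; set w := take N s; set y := nth 0 s N.
  have hw : size w = N by rewrite /w size_take hs ltnSn.
  rewrite {1}(takeE hs) -/w -/y {1}(PE y).
  rewrite (ml_cR (n := N.+1)); last by rewrite hw addn1.
  rewrite lemA -{1}[e' y]scale1r (ml_cR (n := N.+1)); last by rewrite hw addn1.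
  rewrite scale1r cR_last -(takeE hs) cR_tevs_last.
  have -> : tevs (fun q => cR (w ++ [:: mul (e' (nth 0 q 0)) (nth 0 q 1)]))
              (rdelta one Delta (P y)) =
            tevs (fun q => cR (w ++ q)) (rdelta one Delta (P y)).
    by apply: eq_tevs => q hq; rewrite cR_mul_last -(size2E hq).
  rewrite rdeltaP; last by apply: ml_catl; exact: ml_cR.
  by rewrite addrCA [X in _ + X]addrCA addrA.
rewrite (eq_tevs (deltan one Delta N x) hpt) !tevsD.
rewrite -(deltan_last (F := cR)); last exact: ml_cR.
rewrite (eps_last (G := fun w => cR (w ++ [:: one]))) //; last by apply: ml_catr; exact: ml_cR.
rewrite (eps_last (G := fun w => cR (w ++ [:: one; one]))) //; last by apply: ml_catr; exact: ml_cR.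
by rewrite !addr0.
Qed.

Lemma main_claim N x : eps x = 0 ->
  x = \sum_(0 <= n < N) tevs (fun s => wr (map e' s)) (deltan one Delta n x)
      + tevs cR (deltan one Delta N x).
Proof.
move=> hx; elim: N => [|N IH].
  by rewrite big_nil add0r deltan0.
by rewrite big_nat_recr //= -addrA -main_step.
Qed.

Lemma termE n x :
  tev (@omega_r K H mul n) (tmapall (fun y => e (y - eps y *: one)) (deltan one Delta n x))
  = tevs (fun s => wr (map e' s)) (deltan one Delta n x).
Proof.
rewrite /tev /tmapall /tevs big_map; apply: eq_bigr => p _ /=.
by rewrite /omega_r theadE.
Qed.

Lemma final_sec x : eps x = 0 ->
  (exists N0, forall n, (N0 <= n)%N -> teq (deltan one Delta n x) [::]) ->
  exists N, (forall n, (N <= n)%N ->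
     tev (@omega_r K H mul n) (tmapall (fun y => e (y - eps y *: one)) (deltan one Delta n x)) = 0) /\
  x = \sum_(0 <= n < N)
     tev (@omega_r K H mul n) (tmapall (fun y => e (y - eps y *: one)) (deltan one Delta n x)).
Proof.
move=> hx [N0 hN0]; exists N0; split.
  move=> n hn; rewrite termE (ml_teq (ml_wre (n:=n.+1)) (hN0 n hn)) tevs_nil //.
rewrite {1}(main_claim N0 hx) (ml_teq (ml_cR (n:=N0.+1)) (hN0 N0 (leqnn _))) tevs_nil addr0.
by apply: eq_bigr => n _; rewrite termE.
Qed.

End Bialg.

Unset Implicit Arguments.
Set Strict Implicit.

(* e^{(x)(n+1)} is applied to delta^n(x), an element of ker(eps)^{(x)(n+1)},
   through the linear extension  y |-> e (y - eps(y) 1)  of e to H. *)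
Theorem lemma4p3 (K : fieldType) (H : lmodType K) (mul : H -> H -> H)
  (one : H) (Delta : H -> tens H 2) (eps : H -> K)
  (HB : AscMag_bialgebra mul one Delta eps)
  (Hconn : connected one Delta eps)
  (e : H -> H) (He : is_e mul one Delta eps e)
  (x : H) (Hx : eps x = 0) :
  let term n := tev (@omega_r K H mul n)
                  (tmapall (fun y => e (y - eps y *: one)) (deltan one Delta n x)) in
  exists N : nat, (forall n, (N <= n)%N -> term n = 0) /\
                  x = \sum_(0 <= n < N) term n.
Proof.
move=> term; rewrite /term.
move: HB => [mulDl [mulDr [mul1 [mulr1 [DeltaL [coass [epsL [cu1 [cu2 [Done _]]]]]]]]]].
have [one0 | one_ne0] := eqVneq one 0.
  have allz : forall h : H, h = 0.
    move=> h; rewrite -(mul1 h) one0.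
    exact: (islin0 (mul_linl mulDl h)).
  exists 0%N; split; first by move=> n _; apply: allz.
  by rewrite big_geq //; apply: allz.
have eps1 : eps one = 1.
  have h1 := cu1s cu1 one.
  have hml : ml 2 (fun s : seq H => eps (nth 0 s 0) *: nth 0 s 1).
    apply: ml2 => a u v b /=; first by rewrite epsL scalerDl scalerA.
    by rewrite scalerDr scalerA mulrC -scalerA.
  rewrite (Delta_one Done hml) /= in h1.
  have : (eps one - 1) *: one = 0 by rewrite scalerBl scale1r h1 subrr.
  move/eqP; rewrite scaler_eq0 (negbTE one_ne0) orbF subr_eq0 => /eqP //.
apply: (final_sec mulDl mulDr DeltaL coass epsL cu1 cu2 Done eps1 He Hx).
exact: Hconn.
Qed.
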